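(* Let $\mathbf{x}$ be a feasible solution of $\textsc{Node-MC-Rel}$. Choose $\ell$ uniformly at random from $\{1,\dots,k\}$ and, independently, $\theta$ uniformly at random from $(0,1/2)$, and let $C=C(\ell,\theta)=\bigcup_{i\neq\ell}B^+(s_i,\theta)$. Then for every $v\in V$, $\Pr[v\in C]\le 2(1-1/k)\,x_v$.
   Context: $G=(V,E)$ is an undirected graph with non-negative node weights $w_v$ and terminal set $S=\{s_1,\dots,s_k\}$, $k\ge2$, forming an independent set. For $i<j$, $\mathcal{P}_{ij}$ is the set of paths between $s_i$ and $s_j$. $\textsc{Node-MC-Rel}$: minimize $\sum_{v\in V\setminus S}w_vx_v$ s.t. $\sum_{v\in p}x_v\ge1$ for all $p\in\mathcal{P}_{ij}$, $i<j$ (sum over all vertices of $p$ including endpoints), $x_v=0$ for $v\in S$, $x\ge0$. $d(a,b)$ is the minimum over paths from $a$ to $b$ of the sum of $x$ over all vertices of the path including both endpoints. $B(u,r)=\{v:d(u,v)\le r\}$; $B^+(u,r)$ is the set of nodes not in $B(u,r)$ adjacent to some node of $B(u,r)$. *)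

(* Defs.v *)
From Stdlib Require Import Reals ClassicalEpsilon.
From mathcomp Require Import all_boot.
Set Implicit Arguments. Unset Strict Implicit. Unset Printing Implicit Defensive.

Section Defs.
Variable V : finType.
Variable adj : rel V.
Variable x : V -> R.

Definition simple_path (a b : V) (p : seq V) : bool :=
  [&& path adj a p, last a p == b & uniq (a :: p)].

Definition path_len (a : V) (p : seq V) : R := foldr (fun u acc => Rplus (x u) acc) R0 (a :: p).

(* v \in B(u,r)  <->  d(u,v) <= r, where d(u,v) is the minimum of path_len over
   the (finitely many) simple paths from u to v (d = +oo if there is none) *)
Definition in_ball (u : V) (r : R) (v : V) : Prop :=
  exists p : seq V, simple_path u v p /\ Rle (path_len u p) r.

Definition in_ball_plus (u : V) (r : R) (v : V) : Prop :=
  ~ in_ball u r v /\ exists w : V, adj w v /\ in_ball u r w.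

Definition feasible (k : nat) (s : 'I_k -> V) : Prop :=
  (forall v, Rle R0 (x v)) /\ (forall i, x (s i) = R0) /\
  (forall i j : 'I_k, i <> j -> forall p, simple_path (s i) (s j) p ->
     Rle R1 (path_len (s i) p)).

Definition in_cut (k : nat) (s : 'I_k -> V) (l : 'I_k) (theta : R) (v : V) : Prop :=
  exists i : 'I_k, i <> l /\ in_ball_plus (s i) theta v.
End Defs.

Definition indic (P : Prop) : R :=
  if excluded_middle_informative P then R1 else R0.

(* Main.v *)
Require Import Defs.
From Stdlib Require Import Reals ClassicalEpsilon Lra.
From mathcomp Require Import all_boot.
From Coquelicot Require Import Coquelicot.
Set Implicit Arguments. Unset Strict Implicit. Unset Printing Implicit Defensive.
Open Scope R_scope.

Definition Rleb (c t : R) : bool := if Rle_dec c t then true else false.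

Lemma ex_RInt_pattern (cs : seq R) : forall (F : seq bool -> R) a b, a <= b ->
  ex_RInt (fun t => F (map (fun c => Rleb c t) cs)) a b.
Proof.
elim: cs => [|c cs IH] F a b hab /=.
  exact: ex_RInt_const.
set c' := Rmax a (Rmin c b).
have h1 : a <= c' by apply Rmax_l.
have h2 : c' <= b by unfold c'; apply Rmax_lub; [lra| apply Rmin_r].
apply: (ex_RInt_Chasles _ a c' b).
- have := IH (fun l => F (false :: l)) a c' h1; apply: ex_RInt_ext.
    move=> t; rewrite Rmin_left // Rmax_right // => -[ht1 ht2].
    rewrite /Rleb; case: Rle_dec => // hc.
    exfalso; unfold c' in *.
    move: ht2; rewrite /Rmax /Rmin; repeat case: Rle_dec; lra.
- have := IH (fun l => F (true :: l)) c' b h2; apply: ex_RInt_ext.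
    move=> t; rewrite Rmin_left // Rmax_right // => -[ht1 ht2].
    rewrite /Rleb; case: Rle_dec => // hc.
    exfalso; unfold c' in *.
    move: ht1 ht2 hc; rewrite /Rmax /Rmin; repeat case: Rle_dec; lra.
Qed.

Lemma ex_RInt_determined (cs : seq R) (f : R -> R) a b : a <= b ->
  (forall t t', (forall c, List.In c cs -> (c <= t <-> c <= t')) -> f t = f t') ->
  ex_RInt f a b.
Proof.
move=> hab hf.
pose F := fun l : seq bool =>
  f (epsilon (inhabits 0) (fun t => map (fun c => Rleb c t) cs = l)).
have := ex_RInt_pattern cs F hab; apply: ex_RInt_ext.
move=> t _; rewrite /F.
set t' := epsilon _ _.
have ht' : map (fun c => Rleb c t') cs = map (fun c => Rleb c t) cs.
  rewrite /t'; apply: (epsilon_spec (inhabits 0) (fun t0 => map (fun c => Rleb c t0) cs = map (fun c => Rleb c t) cs)).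
  by exists t.
apply: hf => c hc.
clearbody t'; clear F; move: ht'; elim: cs hc => //= c0 cs IH [<-|hc] [].
  rewrite /Rleb; do 2 case: Rle_dec => //; intros; split; intros; lra.
by move=> _ /IH; apply.
Qed.

Definition st (c t : R) : R := indic (Rle c t).
Definition cl (c : R) : R := Rmax 0 (Rmin c (/2)).

Lemma ex_RInt_st c a b : a <= b -> ex_RInt (st c) a b.
Proof.
move=> hab; apply: (@ex_RInt_determined [:: c] (st c) a b hab) => t t' h.
rewrite /st /indic; do 2 case: excluded_middle_informative => //=; 
  move: (h c (or_introl erefl)); tauto.
Qed.

Lemma RInt_st c : RInt (st c) 0 (/2) = /2 - cl c.
Proof.
have h1 : 0 <= cl c by apply Rmax_l.
have h2 : cl c <= /2 by unfold cl; apply Rmax_lub; [lra| apply Rmin_r].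
rewrite -(RInt_Chasles _ 0 (cl c) (/2)); try exact: ex_RInt_st.
rewrite (RInt_ext (st c) (fun _ => 0) 0 (cl c)); last first.
  move=> t; rewrite Rmin_left // Rmax_right // => -[ht1 ht2].
  rewrite /st /indic; case: excluded_middle_informative => // hc.
  exfalso; move: ht2 hc; rewrite /cl /Rmax /Rmin; repeat case: Rle_dec; lra.
rewrite (RInt_ext (st c) (fun _ => 1) (cl c) (/2)); last first.
  move=> t; rewrite Rmin_left // Rmax_right // => -[ht1 ht2].
  rewrite /st /indic; case: excluded_middle_informative => // hc.
  exfalso; move: ht1 ht2 hc; rewrite /cl /Rmax /Rmin; repeat case: Rle_dec; lra.
rewrite !RInt_const /scal /= /mult /= /plus /=; ring.
Qed.
Section Graph.
Variable V : finType.
Variable adj : rel V.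
Variable x : V -> R.
Hypothesis x0 : forall v, 0 <= x v.

Definition sx (l : seq V) : R := foldr (fun u acc => x u + acc) 0 l.

Lemma path_lenE a p : path_len x a p = x a + sx p.
Proof. by []. Qed.

Lemma sx_cat l1 l2 : sx (l1 ++ l2) = sx l1 + sx l2.
Proof. elim: l1 => /= [|a l IH]; rewrite ?IH; ring. Qed.

Lemma sx_rcons l a : sx (rcons l a) = sx l + x a.
Proof. by rewrite -cats1 sx_cat /=; ring. Qed.

Lemma sx_rev l : sx (rev l) = sx l.
Proof. elim: l => //= a l IH; rewrite rev_cons sx_rcons IH; ring. Qed.

Lemma sx_ge0 l : 0 <= sx l.
Proof. elim: l => /= [|a l IH]; [lra| have := x0 a; lra]. Qed.

Lemma sx_rem a l : a \in l -> sx l = x a + sx (rem a l).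
Proof.
elim: l => //= b l IH; rewrite inE.
case: (b =P a) => [->|ne] //= h.
have al : a \in l by move: h; case: (a =P b) => // e; exfalso; apply: ne.
by rewrite (IH al); ring.
Qed.

Lemma mem_rem_ne (a b : V) l : b \in l -> b != a -> b \in rem a l.
Proof.
elim: l => //= c l IH; rewrite inE => /orP[/eqP->|hb] hne.
  by case: eqP => [e|_]; [move: hne; rewrite e eqxx | rewrite inE eqxx].
by case: eqP => _ //; rewrite inE IH ?orbT.
Qed.

Lemma sx_sub l' : forall l, uniq l' -> {subset l' <= l} -> sx l' <= sx l.
Proof.
elim: l' => /= [|a l' IH] l; first by move=> *; apply: sx_ge0.
move=> /andP[nal' ul'] hs.
have al : a \in l by apply: hs; rewrite inE eqxx.
rewrite (sx_rem al).
suff : sx l' <= sx (rem a l) by lra.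
apply: IH => // b hb; apply: mem_rem_ne; first by apply: hs; rewrite inE hb orbT.
by apply/eqP => e; move: nal'; rewrite -e hb.
Qed.

Lemma shorten_walk a p : path adj a p ->
  exists p', simple_path adj a (last a p) p' /\ path_len x a p' <= path_len x a p.
Proof.
move=> hp; case: (shortenP hp) => p' hp' up' sub.
exists p'; split; first by rewrite /simple_path hp' eqxx up'.
rewrite !path_lenE; suff : sx p' <= sx p by lra.
apply: sx_sub => //; by case/andP: up'.
Qed.
End Graph.
Lemma inlist (T : eqType) (a : T) (l : seq T) : a \in l -> List.In a l.
Proof. elim: l => //= b l IH; rewrite inE => /orP[/eqP->|/IH]; tauto. Qed.

Lemma argmin_cons (T : eqType) (g : T -> R) (l : seq T) : forall c,
  exists a, a \in c :: l /\ forall b, b \in c :: l -> g a <= g b.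
Proof.
elim: l => [|d l IH] c.
  by exists c; split; rewrite ?inE // => b; rewrite inE => /eqP->; lra.
have [a [al ha]] := IH d.
case: (Rle_dec (g c) (g a)) => h.
  exists c; split; first exact: mem_head.
  move=> b; rewrite inE => /orP[/eqP->|/ha]; lra.
exists a; split; first by rewrite inE al orbT.
move=> b; rewrite inE => /orP[/eqP->|/ha]; lra.
Qed.

Lemma argmin (T : eqType) (g : T -> R) (l : seq T) a0 : a0 \in l ->
  exists a, a \in l /\ forall b, b \in l -> g a <= g b.
Proof. by case: l => // c l _; apply: argmin_cons. Qed.

Definition allseqs (V : finType) (n : nat) : seq (seq V) :=
  flatten [seq [seq tval t | t <- enum {: m.-tuple V}] | m <- seq.iota 0%N n].

Lemma mem_allseqs (V : finType) n (p : seq V) : (size p < n)%N -> p \in allseqs V n.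
Proof.
move=> hp; apply/flattenP; exists [seq tval t | t <- enum {: (size p).-tuple V}].
  by apply/mapP; exists (size p) => //; rewrite seq.mem_iota /= add0n hp.
by apply/mapP; exists (in_tuple p) => //; rewrite mem_enum.
Qed.

Lemma simple_size (V : finType) (adj : rel V) (a b : V) p :
  simple_path adj a b p -> (size p < #|V|)%N.
Proof.
case/and3P => _ _ /card_uniqP h.
by have := max_card (mem (a :: p)); rewrite h.
Qed.

Lemma indic_iff (P Q : Prop) : (P <-> Q) -> indic P = indic Q.
Proof.
rewrite /indic => h; case: excluded_middle_informative => hP;
  case: excluded_middle_informative => hQ //; exfalso; tauto.
Qed.

Lemma indic01 (P : Prop) : 0 <= indic P <= 1.
Proof. rewrite /indic; destruct (excluded_middle_informative P); simpl; lra. Qed.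

Section Sums.
Variable T : eqType.
Variable g : T -> Prop.
Definition sumI (l : seq T) := foldr (fun a acc => Rplus (indic (g a)) acc) R0 l.

Lemma sumI_bnd l : 0 <= sumI l <= INR (size l).
Proof.
elim: l => [|a l IH]; first by rewrite /=; lra.
have -> : sumI (a :: l) = indic (g a) + sumI l by [].
rewrite [size (a :: l)]/= S_INR; have := indic01 (g a); lra.
Qed.

Lemma sumI_bnd1 l a : a \in l -> ~ g a -> sumI l <= INR (size l) - 1.
Proof.
elim: l => // b l IH.
have -> : sumI (b :: l) = indic (g b) + sumI l by [].
rewrite [size (b :: l)]/= S_INR inE => /orP[/eqP e|al] hna.
  subst b; rewrite /indic; destruct (excluded_middle_informative (g a)) => //=.
  have := sumI_bnd l; lra.
have := IH al hna; have := indic01 (g b); lra.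
Qed.

Lemma sumI_0 l : (forall a, ~ g a) -> sumI l = 0.
Proof.
move=> h; elim: l => //= a l ->; rewrite /indic.
by destruct (excluded_middle_informative (g a)) => //=; [case: (h a)|rewrite Rplus_0_l].
Qed.
End Sums.

Lemma stE1 c t : c <= t -> st c t = 1.
Proof. rewrite /st /indic => h; by destruct (excluded_middle_informative (c <= t)). Qed.
Lemma stE0 c t : t < c -> st c t = 0.
Proof. rewrite /st /indic => h; destruct (excluded_middle_informative (c <= t)) => //=; lra. Qed.
Lemma st01 c t : 0 <= st c t <= 1.
Proof. exact: indic01. Qed.
Lemma st_mono a b t : a <= b -> st b t <= st a t.
Proof.
move=> hab; case: (Rle_dec b t) => h.
  rewrite (stE1 h) stE1; lra.
rewrite (stE0 (Rnot_le_lt _ _ h)); have := st01 a t; lra.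
Qed.

Lemma RInt_comb (al be a b : R) :
  ex_RInt (fun t => al * st a t + be * st b t) 0 (/2) /\
  RInt (fun t => al * st a t + be * st b t) 0 (/2) = al * (/2 - cl a) + be * (/2 - cl b).
Proof.
have h0 : 0 <= /2 by lra.
have ha := ex_RInt_scal _ _ _ al (ex_RInt_st a h0).
have hb := ex_RInt_scal _ _ _ be (ex_RInt_st b h0).
split; first exact: (ex_RInt_plus _ _ _ _ ha hb).
rewrite (RInt_plus _ _ _ _ ha hb) !RInt_scal ?RInt_st //; exact: ex_RInt_st.
Qed.

Section Main.
Variables (V : finType) (adj : rel V) (adj_sym : symmetric adj) (k : nat)
  (hk : (2 <= k)%N) (s : 'I_k -> V) (x : V -> R) (hx : feasible adj x s) (v : V).

Lemma hx0 u : 0 <= x u. Proof. by case: hx. Qed.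
Lemma hfeas i j p : i <> j -> simple_path adj (s i) (s j) p -> 1 <= path_len x (s i) p.
Proof. by case: hx => _ [_ h] hij hp; apply: (h i j hij p hp). Qed.

Lemma INRk : 2 <= INR k.
Proof. by apply: (le_INR 2 k); apply/leP. Qed.

Definition Pb i t := in_ball_plus adj x (s i) t v.

Lemma walk_to_v i t : Pb i t ->
  exists p, simple_path adj (s i) v p /\ path_len x (s i) p <= t + x v.
Proof.
case=> _ [w [hwv [p [hp hl]]]].
case/and3P: hp => hpath /eqP hlast _.
have hw : path adj (s i) (p ++ [:: v]) by rewrite cat_path hpath hlast /= hwv.
have [p' [hs' hl']] := @shorten_walk _ adj x hx0 _ _ hw.
exists p'; split; first by move: hs'; rewrite last_cat hlast.
move: hl' hl; rewrite !path_lenE sx_cat /=; lra.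
Qed.

Lemma min_or_none : (forall i p, ~ simple_path adj (s i) v p) \/
  exists i0 q, simple_path adj (s i0) v q /\ forall i p, simple_path adj (s i) v p ->
     path_len x (s i0) q <= path_len x (s i) p.
Proof.
set C := [seq ip <- [seq (i, p) | i <- enum 'I_k, p <- allseqs V #|V|]
           | simple_path adj (s ip.1) v ip.2].
have memC i p : simple_path adj (s i) v p -> (i, p) \in C.
  move=> h; rewrite mem_filter /= h /=; apply/allpairsP; exists (i, p) => /=.
  by split => //; [rewrite mem_enum | apply: mem_allseqs; exact: simple_size h].
have inC ip : ip \in C -> simple_path adj (s ip.1) v ip.2.
  by rewrite mem_filter => /andP[].
case hC: C memC inC => [|c C'] memC inC.
  by left => i p /memC.
right.
have [[i0 q] [hin hmin]] :=
  argmin (fun ip : 'I_k * seq V => path_len x (s ip.1) ip.2) (mem_head c C').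
exists i0, q; split; first exact: (inC _ hin).
by move=> i p /memC /hmin.
Qed.

Section WithMin.
Variables (i0 : 'I_k) (q : seq V).
Hypothesis hq : simple_path adj (s i0) v q.
Hypothesis hmin : forall i p, simple_path adj (s i) v p ->
     path_len x (s i0) q <= path_len x (s i) p.
Let m := path_len x (s i0) q.

Lemma F1 i t : Pb i t -> m - x v <= t.
Proof. move=> /walk_to_v [p [hp hl]]; have := hmin hp; rewrite /m; lra. Qed.

Lemma F2 t : Pb i0 t -> t < m.
Proof.
case=> hnb _; apply: Rnot_le_lt => h; apply: hnb; by exists q.
Qed.

Lemma F3 j t : Pb j t -> j <> i0 -> 1 <= t + m.
Proof.
case=> _ [w [hwv [p [hp hl]]]] hj.
case/and3P: hp => hpath /eqP hlast _.
case/and3P: (hq) => qpath /eqP qlast _.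
have hrev : rev (s i0 :: q) = v :: rev (seq.belast (s i0) q).
  by rewrite lastI rev_rcons qlast.
have hW : path adj (s j) (p ++ rev (s i0 :: q)).
  rewrite cat_path hpath hlast hrev /= hwv /= -{1}qlast rev_path.
  have e : (fun z => adj^~ z) =2 adj by move=> a b; rewrite /= adj_sym.
  by rewrite (eq_path e).
have [p' [hs' hl']] := @shorten_walk _ adj x hx0 _ _ hW.
have hWl : last (s j) (p ++ rev (s i0 :: q)) = s i0.
  by rewrite last_cat rev_cons last_rcons.
rewrite hWl in hs'.
have := hfeas hj hs'.
move: hl' hl; rewrite /m !path_lenE sx_cat sx_rev /=; lra.
Qed.

Definition sumC t := sumI (fun l => in_cut adj x s l t v) (enum 'I_k).

Lemma bound_small t : 0 < t < /2 -> m <= /2 ->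
  sumC t <= (INR k - 1) * (st (m - x v) t - st m t).
Proof.
move=> ht hm; have hk2 := INRk.
have onlyi0 : forall j, Pb j t -> j = i0.
  move=> j hj; case: (j =P i0) => // ne; have := F3 hj ne; lra.
case: (classic (exists l, in_cut adj x s l t v)) => [[l0 [i [hil hPi]]]|none].
  have e := onlyi0 i hPi; subst i.
  rewrite (stE1 (F1 hPi)) (stE0 (F2 hPi)).
  have hni : ~ in_cut adj x s i0 t v by case=> j [hj hPj]; exact: hj (onlyi0 j hPj).
  have := @sumI_bnd1 _ (fun l => in_cut adj x s l t v) (enum 'I_k) i0 (mem_enum _ _) hni.
  rewrite size_enum_ord /sumC; lra.
rewrite /sumC sumI_0; last by move=> l hl; apply: none; exists l.
have := @st_mono (m - x v) m t (ltac:(have := hx0 v; lra)).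
move=> h; apply: Rmult_le_pos; lra.
Qed.

Lemma bound_big t : 0 < t < /2 -> /2 < m ->
  sumC t <= (INR k - 1) * (st (m - x v) t + st (Rmax (m - x v) (1 - m)) t).
Proof.
move=> ht hm; have hk2 := INRk.
have hs1 := st01 (m - x v) t; have hs2 := st01 (Rmax (m - x v) (1 - m)) t.
case: (classic (exists l, in_cut adj x s l t v)) => [[l0 [i [hil hPi]]]|none].
  rewrite (stE1 (F1 hPi)).
  case: (classic (exists j, j <> i0 /\ Pb j t)) => [[j [hj hPj]]|nj].
    have h3 := F3 hPj hj; have h1 := F1 hPj.
    rewrite stE1; last by apply: Rmax_lub; lra.
    have := @sumI_bnd _ (fun l => in_cut adj x s l t v) (enum 'I_k).
    rewrite size_enum_ord /sumC; lra.
  have hni : ~ in_cut adj x s i0 t v by case=> j [hj hPj]; apply: nj; exists j.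
  have := @sumI_bnd1 _ (fun l => in_cut adj x s l t v) (enum 'I_k) i0 (mem_enum _ _) hni.
  rewrite size_enum_ord /sumC; nra.
rewrite /sumC sumI_0; last by move=> l hl; apply: none; exists l.
apply: Rmult_le_pos; lra.
Qed.
End WithMin.
End Main.

Definition csV (V : finType) (x : V -> R) : seq R :=
  List.flat_map (fun u => List.map (path_len x u) (allseqs V #|V|)) (enum V).

Lemma ball_det (V : finType) (adj : rel V) (x : V -> R) u y t t' :
  (forall c, List.In c (csV x) -> (c <= t <-> c <= t')) ->
  in_ball adj x u t y -> in_ball adj x u t' y.
Proof.
move=> h [p [hp hl]]; exists p; split => //.
apply/(h _ _).1 => //.
apply/List.in_flat_map; exists u; split; first by apply: inlist; rewrite mem_enum.
apply: List.in_map; apply: inlist; apply: mem_allseqs; exact: simple_size hp.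
Qed.

Lemma cut_det (V : finType) (adj : rel V) (x : V -> R) k (s : 'I_k -> V) v l t t' :
  (forall c, List.In c (csV x) -> (c <= t <-> c <= t')) ->
  in_cut adj x s l t v -> in_cut adj x s l t' v.
Proof.
move=> h [i [hil [hnb [w [hw hb]]]]]; exists i; split => //; split.
  move=> hb'; apply: hnb; apply: (ball_det (t := t')) hb' => c hc.
  by apply: iff_sym; apply: h.
by exists w; split => //; apply: ball_det hb.
Qed.

Unset Implicit Arguments.
Theorem mainTheorem10 (V : finType) (adj : rel V)
  (adj_sym : symmetric adj) (adj_irr : irreflexive adj)
  (k : nat) (hk : (2 <= k)%N) (s : 'I_k -> V) (s_inj : injective s)
  (s_indep : forall i j : 'I_k, ~~ adj (s i) (s j))
  (x : V -> R) (hx : feasible adj x s) (v : V) :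
  exists pr : Riemann_integrable
      (fun theta => Rmult (Rmult 2 (Rinv (INR k)))
         (foldr (fun l acc => Rplus (indic (in_cut adj x s l theta v)) acc) R0 (enum 'I_k)))
      R0 (Rinv 2),
    Rle (RiemannInt pr) (Rmult (Rmult 2 (Rminus R1 (Rinv (INR k)))) (x v)).
Proof.
set f := fun theta => _.
have hf : ex_RInt f 0 (/2).
  apply: (@ex_RInt_determined (csV x)); first lra.
  move=> t t' h; rewrite /f; congr (_ * _).
  elim: (enum 'I_k) => //= a l ->; congr (_ + _); apply: indic_iff; split.
    exact: cut_det.
  by apply: cut_det => c hc; apply: iff_sym; apply: h.
exists (ex_RInt_Reals_0 _ _ _ hf); rewrite -RInt_Reals.
have hk2 := INRk hk.
have hkp : 0 < INR k by lra.
have hx0v := hx0 hx v.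
have hal : 2 * / INR k * (INR k - 1) = 2 * (1 - / INR k) by field; lra.
have hal0 : 0 <= 2 * (1 - / INR k).
  have : / INR k <= / 2 by apply: Rinv_le_contravar; lra.
  lra.
have fsum t : f t = 2 * / INR k * sumC adj s x v t by [].
case: (min_or_none adj s x v) => [none|[i0 [q [hq hmin]]]].
  have [hg hgi] := RInt_comb 0 0 0 0.
  apply: Rle_trans (RInt_le _ _ _ _ _ hf hg _) _; first lra.
    move=> t ht; rewrite fsum /sumC sumI_0; first lra.
    move=> l [i [_ hP]]; have [p [hp _]] := walk_to_v hx hP; exact: none hp.
  rewrite hgi; have := Rmult_le_pos _ _ hal0 hx0v; lra.
set m := path_len x (s i0) q.
case: (Rle_dec m (/2)) => hm.
  set al := 2 * / INR k * (INR k - 1).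
  have [hg hgi] := RInt_comb al (- al) (m - x v) m.
  apply: Rle_trans (RInt_le _ _ _ _ _ hf hg _) _; first lra.
    move=> t ht; rewrite fsum.
    have := bound_small adj_sym hk hx hq hmin ht hm.
    move=> hb; rewrite /al.
    have hp : 0 <= 2 * / INR k by apply: Rmult_le_pos; [lra | apply: Rlt_le; apply: Rinv_0_lt_compat].
    have h := Rmult_le_compat_l _ _ _ hp hb; apply: (Rle_trans _ _ _ h); right; rewrite /m; ring.
  rewrite hgi /al hal.
  have : cl m - cl (m - x v) <= x v.
    rewrite /cl /Rmax /Rmin; repeat case: Rle_dec; intros; lra.
  nra.
have hm' : /2 < m by lra.
set al := 2 * / INR k * (INR k - 1).
have [hg hgi] := RInt_comb al al (m - x v) (Rmax (m - x v) (1 - m)).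
apply: Rle_trans (RInt_le _ _ _ _ _ hf hg _) _; first lra.
  move=> t ht; rewrite fsum.
  have := bound_big adj_sym hk hx hq hmin ht hm'.
  move=> hb; rewrite /al.
  have hp : 0 <= 2 * / INR k by apply: Rmult_le_pos; [lra | apply: Rlt_le; apply: Rinv_0_lt_compat].
  have h := Rmult_le_compat_l _ _ _ hp hb; apply: (Rle_trans _ _ _ h); right; rewrite /m; ring.
rewrite hgi /al hal.
have : (/2 - cl (m - x v)) + (/2 - cl (Rmax (m - x v) (1 - m))) <= x v.
  rewrite /cl /Rmax /Rmin; repeat case: Rle_dec; intros; lra.
nra.
Qed.
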